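(* Let $I$ be a compact non-degenerate interval and let $f:I\to\mathbb{R}$ be continuous. If the graph $\{(x,f(x)):x\in I\}\subseteq\mathbb{R}^2$ is $1$-monotone, then $f$ is of bounded variation.
   Context: A metric space $(X,d)$ is $c$-monotone ($c>0$) if there is a linear order $<$ on $X$ such that $d(x,y)\le c\,d(x,z)$ whenever $x<y<z$ in $X$. The graph carries the Euclidean metric of $\mathbb{R}^2$. *)

(* Defs.v *)
From Stdlib Require Import Reals List.
Open Scope R_scope.

Definition dist2 (p q : R * R) : R :=
  sqrt ((fst p - fst q) ^ 2 + (snd p - snd q) ^ 2).

Definition linear_order_on {T : Type} (S : T -> Prop) (le : T -> T -> Prop) : Prop :=
  (forall x, S x -> le x x) /\
  (forall x y, S x -> S y -> le x y -> le y x -> x = y) /\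
  (forall x y z, S x -> S y -> S z -> le x y -> le y z -> le x z) /\
  (forall x y, S x -> S y -> le x y \/ le y x).

Definition c_monotone (c : R) (S : R * R -> Prop) : Prop :=
  exists le : R * R -> R * R -> Prop,
    linear_order_on S le /\
    forall x y z, S x -> S y -> S z ->
      le x y -> x <> y -> le y z -> y <> z ->
      dist2 x y <= c * dist2 x z.

Definition graph_on (f : R -> R) (a b : R) : R * R -> Prop :=
  fun p => a <= fst p <= b /\ snd p = f (fst p).

Fixpoint var_sum (f : R -> R) (x : R) (l : list R) : R :=
  match l with
  | nil => 0
  | y :: l' => Rabs (f y - f x) + var_sum f y l'
  end.

Fixpoint is_partition_from (x : R) (l : list R) (b : R) : Prop :=
  match l with
  | nil => x = b
  | y :: l' => x <= y /\ is_partition_from y l' b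
  end.

Definition bounded_variation (f : R -> R) (a b : R) : Prop :=
  exists M : R, forall l : list R,
    is_partition_from a l b -> var_sum f a l <= M.

Definition continuous_on_interval (f : R -> R) (a b : R) : Prop :=
  forall x, a <= x <= b ->
    forall eps, 0 < eps -> exists delta, 0 < delta /\
      forall y, a <= y <= b -> Rabs (y - x) < delta -> Rabs (f y - f x) < eps.

(* Main.v *)
Require Import Defs.
From Stdlib Require Import Reals Lra Psatz ClassicalEpsilon Classical.
Open Scope R_scope.

Definition clampF (f : R -> R) (a b : R) (x : R) := f (Rmax a (Rmin b x)).

Lemma clampF_eq f a b x : a <= x <= b -> clampF f a b x = f x.
Proof.
  intros [H1 H2]. unfold clampF. rewrite Rmin_right by lra. rewrite Rmax_right by lra. reflexivity.
Qed.

Lemma clampF_cont f a b : a <= b -> continuous_on_interval f a b -> continuity (clampF f a b).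
Proof.
  intros Hab Hc x. unfold continuity_pt, continue_in, limit1_in, limit_in. simpl. unfold R_dist.
  intros eps Heps.
  set (c := Rmax a (Rmin b x)).
  assert (Hcin : a <= c <= b).
  { unfold c. split. apply Rmax_l. apply Rmax_lub. lra. apply Rmin_l. }
  destruct (Hc c Hcin eps Heps) as [d [Hd Hd2]].
  exists d. split. lra. intros y [_ Hy].
  unfold clampF. fold c.
  set (cy := Rmax a (Rmin b y)).
  assert (Hcy : a <= cy <= b).
  { unfold cy. split. apply Rmax_l. apply Rmax_lub. lra. apply Rmin_l. }
  apply Hd2. exact Hcy.
  assert (Rabs (cy - c) <= Rabs (y - x)).
  { unfold cy, c. unfold Rmax, Rmin.
    repeat (destruct Rle_dec); apply Rabs_le; split; apply Rabs_def2 in Hy || idtac;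
    try (pose proof (Rabs_pos (y-x))); unfold Rabs; destruct Rcase_abs; lra. }
  lra.
Qed.
Lemma part_le x l b : is_partition_from x l b -> x <= b.
Proof.
  revert x. induction l as [|y l IH]; simpl; intros x H.
  - lra.
  - destruct H as [H1 H2]. specialize (IH _ H2). lra.
Qed.

Lemma var_tele (f Psi : R -> R) (a b : R) :
  (forall x y, a <= x -> x <= y -> y <= b -> Rabs (f y - f x) <= Psi y - Psi x) ->
  forall l x, a <= x -> is_partition_from x l b -> var_sum f x l <= Psi b - Psi x.
Proof.
  intros H. induction l as [|y l IH]; simpl; intros x Hx Hp.
  - subst. lra.
  - destruct Hp as [H1 H2]. pose proof (part_le _ _ _ H2).
    specialize (IH y ltac:(lra) H2). specialize (H x y Hx H1 H0). lra.
Qed.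
Section SE.
Variables (F : R -> R) (a b : R).
Hypothesis HF : continuity F.
Hypothesis HC : forall s t u, a <= s -> s < t -> t < u -> u <= b ->
  (t-s)^2 + (F t - F s)^2 <= (u-s)^2 + (F u - F s)^2.

Let g := fun x => F x - x.

Lemma g_cont : continuity g.
Proof.
  assert (H : continuity (F - id)%F).
  { apply continuity_minus. exact HF. apply derivable_continuous, derivable_id. }
  intro x. specialize (H x). exact H.
Qed.

Lemma lemG s t u : a <= s -> s < t -> t < u -> u <= b -> g s <= g t -> g s <= g u ->
  F t - F u <= u - t.
Proof.
  intros H1 H2 H3 H4 H5 H6. specialize (HC s t u H1 H2 H3 H4). unfold g in *.
  nra.
Qed.

Definition minP x m := a <= x -> (exists s, a <= s <= x /\ g s = m) /\ (forall z, a <= z <= x -> m <= g z).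

Lemma minP_ex x : exists m, minP x m.
Proof.
  destruct (Rle_dec a x) as [H|H].
  - destruct (continuity_ab_min g a x H (fun c _ => g_cont c)) as [mx [Hm1 Hm2]].
    exists (g mx). intros _. split. exists mx. split; [lra|reflexivity]. exact Hm1.
  - exists 0. intro. lra.
Qed.

Definition mu x := proj1_sig (constructive_indefinite_description _ (minP_ex x)).
Lemma mu_spec x : minP x (mu x).
Proof. unfold mu. destruct constructive_indefinite_description. exact m. Qed.

Lemma mu_le x : a <= x -> mu x <= g x.
Proof. intro H. apply (proj2 (mu_spec x H)). lra. Qed.

Lemma mu_mono x y : a <= x -> x <= y -> mu y <= mu x.
Proof.
  intros H1 H2. destruct (proj1 (mu_spec x H1)) as [s [Hs Hgs]].
  rewrite <- Hgs. apply (proj2 (mu_spec y ltac:(lra))). lra.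
Qed.

Lemma step x y : a <= x -> x < y -> y <= b -> F x - F y <= (y - x) + mu x - mu y.
Proof.
  intros H1 H2 H3.
  pose proof (mu_mono x y H1 ltac:(lra)) as Hm.
  pose proof (mu_le y ltac:(lra)) as Hmy.
  destruct (Rle_dec (g x) (g y)) as [Hxy|Hxy].
  - unfold g in Hxy. lra.
  - destruct (proj1 (mu_spec x H1)) as [s0 [Hs0 Hgs0]].
    pose proof (mu_le x H1) as Hmx.
    destruct (Rle_dec (mu x) (g y)) as [Hy|Hy].
    + assert (s0 < x). { destruct (Rle_lt_or_eq_dec _ _ (proj2 Hs0)) as [|e]; auto. subst. lra. }
      pose proof (lemG s0 x y ltac:(lra) H ltac:(lra) H3 ltac:(lra) ltac:(lra)). lra.
    + destruct (IVT_cor (fun z => g z - mu x) x y) as [tau [Htau Hgt]].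
      { assert (H : continuity (g - fct_cte (mu x))%F).
        { apply continuity_minus. exact g_cont. apply continuity_const. intros ? ?; reflexivity. }
        intro z. exact (H z). }
      lra. nra.
      assert (F x - F tau <= tau - x).
      { destruct (Rle_lt_or_eq_dec _ _ (proj1 Htau)) as [Hl|He].
        - destruct (Rle_lt_or_eq_dec _ _ (proj2 Hs0)) as [Hl2|He2].
          + apply (lemG s0 x tau); lra.
          + subst s0. unfold g in *. lra.
        - subst. lra. }
      unfold g in *. lra.
Qed.

Lemma self_expand_psi : exists Psi : R -> R, forall x y, a <= x -> x <= y -> y <= b ->
  Rabs (F y - F x) <= Psi y - Psi x.
Proof.
  exists (fun x => 2 * x - 2 * mu x + F x).
  intros x y H1 H2 H3.
  destruct (Rle_lt_or_eq_dec _ _ H2) as [Hl|He].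
  - pose proof (step x y H1 Hl H3). pose proof (mu_mono x y H1 H2).
    unfold Rabs; destruct Rcase_abs; lra.
  - subst. replace (F y - F y) with 0 by ring. rewrite Rabs_R0. lra.
Qed.

End SE.
Lemma cross (f : R -> R) (a b : R) (S : R -> Prop) t u eps :
  continuous_on_interval f a b -> a <= t -> t < u -> u <= b -> S t -> ~ S u -> 0 < eps ->
  exists v w, t <= v <= u /\ t <= w <= u /\ S v /\ ~ S w /\ Rabs (v - w) < eps /\ Rabs (f v - f w) < eps.
Proof.
  intros Hc Ha Htu Hb St Su He.
  set (E := fun x => t <= x <= u /\ S x).
  destruct (completeness E) as [c [Hub Hlub]].
  { exists u. intros x [Hx _]. lra. }
  { exists t. split; [lra|exact St]. }
  assert (Htc : t <= c) by (apply Hub; split; [lra|exact St]).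
  assert (Hcu : c <= u) by (apply Hlub; intros x [Hx _]; lra).
  destruct (Hc c ltac:(lra) (eps/2) ltac:(lra)) as [d [Hd Hd2]].
  set (eta := Rmin d eps).
  assert (Heta : 0 < eta) by (unfold eta; apply Rmin_glb_lt; lra).
  assert (Heta1 : eta <= d) by apply Rmin_l.
  assert (Heta2 : eta <= eps) by apply Rmin_r.
  destruct (classic (S c)) as [Sc|Sc].
  - assert (c < u). { destruct (Rle_lt_or_eq_dec _ _ Hcu) as [|e]; auto. subst. contradiction. }
    set (w := Rmin (c + eta/2) u).
    assert (Hw1 : c < w). { unfold w. apply Rmin_glb_lt; lra. }
    assert (Hw2 : w <= c + eta/2) by apply Rmin_l.
    assert (Hw3 : w <= u) by apply Rmin_r.
    exists c, w. split. lra. split. lra. split. exact Sc. split.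
    + intro Sw. assert (w <= c) by (apply Hub; split; [lra|exact Sw]). lra.
    + split. rewrite Rabs_left by lra. lra.
      rewrite Rabs_minus_sym. assert (Rabs (f w - f c) < eps/2). apply Hd2. lra.
      rewrite Rabs_right by lra. lra. lra.
  - assert (~ is_upper_bound E (c - eta/2)).
    { intro Hu. specialize (Hlub _ Hu). lra. }
    apply not_all_ex_not in H. destruct H as [x Hx].
    apply imply_to_and in Hx. destruct Hx as [Ex Hx].
    assert (x <= c) by (apply Hub; exact Ex).
    destruct Ex as [Hx1 Sx].
    exists x, c. split. lra. split. lra. split. exact Sx. split. exact Sc.
    split. rewrite Rabs_left1 by lra. lra.
    assert (Rabs (f x - f c) < eps/2). apply Hd2. lra. rewrite Rabs_left1 by lra. lra. lra.
Qed.
Section Orient.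
Variables (f : R -> R) (a b : R) (le : R * R -> R * R -> Prop).
Hypothesis Hab : a < b.
Hypothesis Hc : continuous_on_interval f a b.
Hypothesis Hlin : linear_order_on (graph_on f a b) le.
Hypothesis Hmon : forall x y z, graph_on f a b x -> graph_on f a b y -> graph_on f a b z ->
      le x y -> x <> y -> le y z -> y <> z -> dist2 x y <= 1 * dist2 x z.

Let P x := (x, f x).

Lemma P_in x : a <= x <= b -> graph_on f a b (P x).
Proof. intros H. unfold graph_on, P. simpl. split; [exact H|reflexivity]. Qed.

Lemma P_neq x y : x <> y -> P x <> P y.
Proof. intros H E. apply H. unfold P in E. congruence. Qed.

Lemma dist_sq x y z : a <= x <= b -> a <= y <= b -> a <= z <= b ->
  le (P x) (P y) -> x <> y -> le (P y) (P z) -> y <> z ->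
  (x - y)^2 + (f x - f y)^2 <= (x - z)^2 + (f x - f z)^2.
Proof.
  intros Hx Hy Hz H1 H2 H3 H4.
  pose proof (Hmon _ _ _ (P_in x Hx) (P_in y Hy) (P_in z Hz) H1 (P_neq _ _ H2) H3 (P_neq _ _ H4)) as H.
  unfold dist2, P in H; cbn [fst snd] in H. rewrite Rmult_1_l in H.
  apply sqrt_le_0; [ | | exact H]; apply Rplus_le_le_0_compat; apply pow2_ge_0.
Qed.

Lemma contra s v w d : a <= s <= b -> a <= v <= b -> a <= w <= b -> v <> s -> w <> s ->
  d^2 <= (v - s)^2 -> d^2 <= (w - s)^2 -> 0 < d ->
  Rabs (v - w) < d/2 -> Rabs (f v - f w) < d/2 ->
  le (P v) (P s) -> le (P s) (P w) -> False.
Proof.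
  intros Hs Hv Hw Hvs Hws Hd1 Hd2 Hd H1 H2 L1 L2.
  pose proof (dist_sq v s w Hv Hs Hw L1 Hvs L2 (not_eq_sym Hws)) as H.
  apply Rabs_def2 in H1. apply Rabs_def2 in H2.
  assert ((v - w)^2 < (d/2)^2) by nra.
  assert ((f v - f w)^2 < (d/2)^2) by nra.
  pose proof (pow2_ge_0 (f v - f s)).
  assert ((d/2)^2 = d^2/4) by field.
  assert (0 < d^2) by nra.
  lra.
Qed.

Lemma lemB s t u : a <= t -> t < u -> u <= b -> a <= s <= b -> (s < t \/ u < s) ->
  ((le (P t) (P s) /\ le (P s) (P u)) \/ (le (P u) (P s) /\ le (P s) (P t))) -> False.
Proof.
  intros Ht Htu Hu Hs Hout Hord.
  destruct Hlin as [Hrefl [Hanti [Htrans Htot]]].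
  set (d := Rmin (Rabs (t - s)) (Rabs (u - s))).
  assert (Hd : 0 < d). { unfold d. apply Rmin_glb_lt; apply Rabs_pos_lt; lra. }
  assert (Hdv : forall v, t <= v <= u -> d^2 <= (v - s)^2 /\ v <> s).
  { intros v Hv.
    assert (Hle : d <= Rabs (v - s)).
    { destruct Hout as [Ho|Ho].
      - apply Rle_trans with (Rabs (t - s)). apply Rmin_l.
        rewrite !Rabs_right by lra. lra.
      - apply Rle_trans with (Rabs (u - s)). apply Rmin_r.
        rewrite !Rabs_left by lra. lra. }
    split. rewrite <- (pow2_abs (v - s)). pose proof (Rabs_pos (v - s)). nra. lra. }
  set (S := fun v => le (P v) (P s)).
  assert (Hsame : forall v, t <= v <= u -> S v -> le (P s) (P v) -> False).
  { intros v Hv H1 H2. apply (proj2 (Hdv v Hv)). assert (P v = P s).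
    apply Hanti; auto. apply P_in; lra. apply P_in; lra. unfold P in H; congruence. }
  assert (Htot' : forall v, t <= v <= u -> ~ S v -> le (P s) (P v)).
  { intros v Hv Hn. destruct (Htot (P v) (P s)) as [H|H]; auto. apply P_in; lra. apply P_in; lra.
    contradiction. }
  destruct Hord as [[H1 H2]|[H1 H2]].
  - destruct (cross f a b S t u (d/2) Hc Ht Htu Hu H1) as [v [w [Hv [Hw [Sv [Sw [E1 E2]]]]]]].
    { intro Su. apply (Hsame u ltac:(lra) Su H2). }
    lra.
    destruct (Hdv v Hv). destruct (Hdv w Hw).
    apply (contra s v w d Hs ltac:(lra) ltac:(lra) H0 H4 H H3 Hd); auto.
  - destruct (cross f a b (fun v => ~ S v) t u (d/2) Hc Ht Htu Hu) as [v [w [Hv [Hw [Sv [Sw [E1 E2]]]]]]].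
    { intro St. apply (Hsame t ltac:(lra) St H2). }
    { intro Su. apply Su. exact H1. }
    lra.
    apply NNPP in Sw.
    destruct (Hdv v Hv). destruct (Hdv w Hw).
    apply (contra s w v d Hs ltac:(lra) ltac:(lra) H4 H0 H3 H Hd).
    all: try (rewrite Rabs_minus_sym; assumption).
    exact Sw. apply Htot'; auto.
Qed.


Lemma orient :
  (forall s t u, a <= s -> s < t -> t < u -> u <= b ->
     (t-s)^2 + (f t - f s)^2 <= (u-s)^2 + (f u - f s)^2) \/
  (forall u t s, a <= u -> u < t -> t < s -> s <= b ->
     (s-t)^2 + (f t - f s)^2 <= (s-u)^2 + (f u - f s)^2).
Proof.
  pose proof Hlin as [Hrefl [Hanti [Htrans Htot]]].
  assert (Pin : forall x, a <= x <= b -> graph_on f a b (P x)) by exact P_in.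
  destruct (Htot (P a) (P b) (Pin a ltac:(lra)) (Pin b ltac:(lra))) as [Hab'|Hba].
  - assert (S1 : forall t, a < t <= b -> le (P a) (P t)).
    { intros t Ht. destruct (Rle_lt_or_eq_dec t b (proj2 Ht)) as [Htb|Htb].
      - destruct (Htot (P a) (P t) (Pin a ltac:(lra)) (Pin t ltac:(lra))) as [H|H]; auto.
        exfalso. apply (lemB a t b); try lra. left; auto.
      - subst; auto. }
    assert (S2 : forall s t, a <= s -> s < t -> t <= b -> le (P s) (P t)).
    { intros s t H1 H2 H3. destruct (Rle_lt_or_eq_dec a s H1) as [Has|Has].
      - destruct (Htot (P s) (P t) (Pin s ltac:(lra)) (Pin t ltac:(lra))) as [H|H]; auto.
        exfalso. apply (lemB t a s); try lra. left. split; auto. apply S1; lra.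
      - subst. apply S1; lra. }
    left. intros s t u H1 H2 H3 H4.
    pose proof (dist_sq s t u ltac:(lra) ltac:(lra) ltac:(lra) (S2 s t H1 H2 ltac:(lra)) ltac:(lra)
       (S2 t u ltac:(lra) H3 H4) ltac:(lra)). nra.
  - assert (S1 : forall t, a < t <= b -> le (P t) (P a)).
    { intros t Ht. destruct (Rle_lt_or_eq_dec t b (proj2 Ht)) as [Htb|Htb].
      - destruct (Htot (P t) (P a) (Pin t ltac:(lra)) (Pin a ltac:(lra))) as [H|H]; auto.
        exfalso. apply (lemB a t b); try lra. right; auto.
      - subst; auto. }
    assert (S2 : forall s t, a <= s -> s < t -> t <= b -> le (P t) (P s)).
    { intros s t H1 H2 H3. destruct (Rle_lt_or_eq_dec a s H1) as [Has|Has].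
      - destruct (Htot (P t) (P s) (Pin t ltac:(lra)) (Pin s ltac:(lra))) as [H|H]; auto.
        exfalso. apply (lemB t a s); try lra. right. split; auto. apply S1; lra.
      - subst. apply S1; lra. }
    right. intros u t s H1 H2 H3 H4.
    pose proof (dist_sq s t u ltac:(lra) ltac:(lra) ltac:(lra) (S2 t s ltac:(lra) H3 H4) ltac:(lra)
       (S2 u t H1 H2 ltac:(lra)) ltac:(lra)). nra.
Qed.

End Orient.

Theorem theorem6p5 (f : R -> R) (a b : R) :
  a < b ->
  continuous_on_interval f a b ->
  c_monotone 1 (graph_on f a b) ->
  bounded_variation f a b.
Proof.
  intros Hab Hc [le [Hlin Hmon]].
  pose proof (clampF_cont f a b ltac:(lra) Hc) as HF.
  set (F := clampF f a b) in *.
  assert (HFe : forall x, a <= x <= b -> F x = f x) by (intros; apply clampF_eq; auto).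
  destruct (orient f a b le Hab Hc Hlin Hmon) as [HC|HC].
  - assert (HCF : forall s t u, a <= s -> s < t -> t < u -> u <= b ->
      (t-s)^2 + (F t - F s)^2 <= (u-s)^2 + (F u - F s)^2).
    { intros s t u H1 H2 H3 H4. rewrite !HFe by lra. apply HC; auto. }
    destruct (self_expand_psi F a b HF HCF) as [Psi HPsi].
    exists (Psi b - Psi a). intros l Hp.
    apply (var_tele f Psi a b); auto; try lra.
    intros x y H1 H2 H3. rewrite <- !HFe by lra. apply HPsi; auto.
  - set (G := fun X => F (- X)).
    assert (HG : continuity G).
    { assert (H : continuity (comp F (fun X => - X))).
      { apply continuity_comp. apply continuity_opp. apply derivable_continuous, derivable_id. exact HF. }
      intro x. exact (H x). }
    assert (HCG : forall s t u, -b <= s -> s < t -> t < u -> u <= -a ->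
      (t-s)^2 + (G t - G s)^2 <= (u-s)^2 + (G u - G s)^2).
    { intros s t u H1 H2 H3 H4. unfold G. rewrite !HFe by lra.
      pose proof (HC (-u) (-t) (-s) ltac:(lra) ltac:(lra) ltac:(lra) ltac:(lra)). nra. }
    destruct (self_expand_psi G (-b) (-a) HG HCG) as [Psi HPsi].
    exists ((- Psi (-b)) - (- Psi (-a))). intros l Hp.
    apply (var_tele f (fun x => - Psi (-x)) a b); auto; try lra.
    intros x y H1 H2 H3.
    pose proof (HPsi (-y) (-x) ltac:(lra) ltac:(lra) ltac:(lra)) as H.
    unfold G in H. rewrite !Ropp_involutive in H. rewrite !HFe in H by lra.
    rewrite Rabs_minus_sym. lra.
Qed.
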